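(* Let $G$ be a non-amenable group, $H$ a subgroup of $G$, and $T$ a right transversal of $H$ in $G$ with $1\in T$; let $\pi_H\colon G\to H$ and $\pi_T\colon G\to T$ be the unique maps with $g=\pi_H(g)\pi_T(g)$ for all $g\in G$. Suppose $G$ has a $k$-paradoxical decomposition with translating sets $S_1,\ldots,S_k$ where $1\in S_1$, and let $S=\bigcup_{i=1}^k S_i$. Let $F$ be a finite nonempty subset of $T$, put $\Phi_i=\pi_T(FS_i^{-1})$, $\Phi=\pi_T(FS^{-1})=\bigcup_{i=1}^k\Phi_i$, and $S_i'=\Phi_iS_iF^{-1}\cap H$. Then: (i) If $|\Phi|=|F|$, then $H$ has a $k$-paradoxical decomposition with translating sets $S_1',\ldots,S_k'$; consequently $\mathcal{T}(H)\leq\sum_{i=1}^k|S_i'|$. (ii) If $|\Phi|\leq\frac{k}{2}|F|$, then $H$ has a $2$-paradoxical decomposition with total translating set $\bigcup_{i=1}^kS_i'$; consequently $\mathcal{T}(H)\leq 2\sum_{i=1}^k|S_i'|$.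
   Context: A right transversal of $H$ in $G$ is a subset containing exactly one element of each right coset $Hg$. For $k\geq 2$, a group $G$ admits a $k$-paradoxical decomposition with translating sets $S_1=\{g_{1,1},\ldots,g_{1,n_1}\},\ldots,S_k=\{g_{k,1},\ldots,g_{k,n_k}\}$ (finite subsets of $G$) if there are pairwise disjoint subsets $P_{i,j}$ ($1\le i\le k$, $1\le j\le n_i$) of $G$ with $G=\bigcup_{j=1}^{n_i}P_{i,j}g_{i,j}$ for each $i$; the set $\bigcup_i S_i$ is the total translating set. A $2$-paradoxical decomposition is a paradoxical decomposition, and the Tarski number $\mathcal{T}(G)$ of a non-amenable group is the minimum of $|S_1|+|S_2|$ over all $2$-paradoxical decompositions (equivalently, the minimal number of pieces $m+n$ in $G=\bigcup_{i=1}^mP_ig_i=\bigcup_{j=1}^nQ_jh_j$ with disjoint pieces). *)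

(* Defs.v *)
From HB Require Import structures.
From mathcomp Require Import all_boot.
From mathcomp Require Import monoid.
From mathcomp Require Import finmap.
From Stdlib Require Import Reals.

Set Implicit Arguments.
Unset Strict Implicit.
Unset Printing Implicit Defensive.

Local Open Scope group_scope.
Local Open Scope fset_scope.

Section Defs.
Variable G : groupType.

Definition fmulg (A B : {fset G}) : {fset G} := [fset a * b | a in A, b in B].
Definition finvg (A : {fset G}) : {fset G} := [fset a^-1 | a in A].

Definition is_subgroup (H : {pred G}) : Prop :=
  [/\ 1 \in H, (forall x y, x \in H -> y \in H -> x * y \in H)
     & (forall x, x \in H -> x^-1 \in H)].

(* T is a right transversal of H in G: T contains exactly one element
   of each right coset H g  (t \in H g  <->  g * t^-1 \in H). *)
Definition right_transversal (H T : {pred G}) : Prop :=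
  forall g, exists! t, t \in T /\ g * t^-1 \in H.

Definition kparadoxical (H : {pred G}) (k : nat) (S : 'I_k -> {fset G}) : Prop :=
  (forall i s, s \in S i -> s \in H) /\
  exists P : 'I_k -> G -> G -> Prop,
    (forall i s x, s \in S i -> P i s x -> x \in H) /\
    (forall i j s t x, s \in S i -> t \in S j -> P i s x -> P j t x ->
        i = j /\ s = t) /\
    (forall i g, g \in H -> exists2 s, s \in S i & exists2 x, P i s x & g = x * s).

(* "T(H) <= n" for the Tarski number T(H) = min of |S_1|+|S_2| over all
   (2-)paradoxical decompositions of H: some paradoxical decomposition of H
   has |S_1| + |S_2| <= n. *)
Definition tarski_number_le (H : {pred G}) (n : nat) : Prop :=
  exists S : 'I_2 -> {fset G}, kparadoxical H S /\ (\sum_(i < 2) #|` S i| <= n)%N.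

Definition amenable : Prop :=
  exists mu : (G -> Prop) -> R,
    (mu (fun _ => True) = 1)%R /\
    (forall A, (0 <= mu A)%R) /\
    (forall A B, (forall x, ~ (A x /\ B x)) ->
        mu (fun x => A x \/ B x) = (mu A + mu B)%R) /\
    (forall g A, mu (fun x => A (g^-1 * x)) = mu A).

End Defs.

(* Main.v *)
Require Import Defs.
From HB Require Import structures.
From mathcomp Require Import all_boot.
From mathcomp Require Import monoid.
From mathcomp Require Import finmap.
From Stdlib Require Import Reals.
From mathcomp Require Import boolp.
From mathcomp Require classical_sets.
From mathcomp Require Import zify.

Set Implicit Arguments.
Unset Strict Implicit.
Unset Printing Implicit Defensive.

Local Open Scope fset_scope.

Section C.
Variables (A B C : choiceType) (f : A -> B -> C) (X : {fset A}) (Y : {fset B}).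
Lemma card2_le : (#|` [fset f x y | x in X, y in Y]| <= #|` X| * #|` Y|)%N.
Proof.
rewrite unlock /= size_seq_fset.
apply: leq_trans (size_undup _) _.
by rewrite size_allpairs.
Qed.
Lemma card2_inj : (forall x x' y y', x \in X -> x' \in X -> y \in Y -> y' \in Y ->
   f x y = f x' y' -> x = x' /\ y = y') ->
  #|` [fset f x y | x in X, y in Y]| = (#|` X| * #|` Y|)%N.
Proof.
move=> Hi; rewrite unlock /= size_seq_fset undup_id ?size_allpairs //.
apply: allpairs_uniq => //; try exact: fset_uniq.
move=> [x y] [x' y'] /allpairsP [[a b] /= [aX bY [-> ->]]]
  /allpairsP [[a' b'] /= [aX' bY' [-> ->]]] /= E.
by have [-> ->] := Hi _ _ _ _ aX aX' bY bY' E.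
Qed.
End C.

Section Hall.
Variables (L Rt : choiceType) (D : L -> Prop) (N : L -> {fset Rt}) (y0 : Rt).

Definition UN (M : L -> {fset Rt}) (B : {fset L}) := \bigcup_(b <- B) M b.
Definition hallc M := forall B : {fset L}, (forall b, b \in B -> D b) ->
   (#|` B| <= #|` UN M B|)%N.

Lemma UNP M B x : reflect (exists2 b, b \in B & x \in M b) (x \in UN M B).
Proof.
apply: (iffP (bigfcupP _ _ _ _)) => [[b /andP[bB _] xb]|[b bB xb]].
  by exists b.
by exists b => //; rewrite bB.
Qed.

Lemma UN_sub M M' B : (forall b, b \in B -> M b `<=` M' b) ->
  UN M B `<=` UN M' B.
Proof.
move=> H; apply/fsubsetP => x /UNP [b bB xb]; apply/UNP; exists b => //.
exact: (fsubsetP (H b bB)).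
Qed.

Lemma UN1 M b : UN M [fset b] = M b.
Proof.
apply/fsetP => x; apply/UNP/idP => [[c]|xb]; last by exists b; rewrite ?inE.
by rewrite inE => /eqP ->.
Qed.


Hypothesis hallN : hallc N.

Definition HT := {M : L -> {fset Rt} | hallc M /\ forall b, M b `<=` N b}.
Definition Rz (s t : HT) : bool := `[< forall b, proj1_sig t b `<=` proj1_sig s b >].

Lemma chain_fin (A : HT -> Prop) (X : eqType) (l : seq X) (Q : X -> HT -> Prop) a0 :
  classical_sets.total_on A Rz -> A a0 ->
  (forall x c c', Rz c c' -> Q x c -> Q x c') ->
  (forall x, x \in l -> exists s, A s /\ Q x s) ->
  exists c, A c /\ forall x, x \in l -> Q x c.
Proof.
move=> tot Aa0 Qd; elim: l => [|x l IH] H.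
  by exists a0; split.
have [c [Ac Qc]] : exists c, A c /\ forall x, x \in l -> Q x c.
  by apply: IH => y yl; apply: H; rewrite inE yl orbT.
have [s [As Qs]] := H x (mem_head _ _).
have [Rcs|Rsc] := tot c s Ac As.
- exists s; split => // y; rewrite inE => /orP [/eqP ->|yl] //.
  exact: Qd Rcs (Qc y yl).
- exists c; split => // y; rewrite inE => /orP [/eqP ->|yl]; last exact: Qc.
  exact: Qd Rsc Qs.
Qed.

Lemma Rz_refl t : Rz t t.
Proof. by apply/asboolP => b; exact: fsubset_refl. Qed.

Lemma Rz_trans r s t : Rz r s -> Rz s t -> Rz r t.
Proof.
move=> /asboolP H1 /asboolP H2; apply/asboolP => b.
exact: fsubset_trans (H2 b) (H1 b).
Qed.

Lemma Rz_anti s t : Rz s t -> Rz t s -> s = t.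
Proof.
case: s => [Ms ps]; case: t => [Mt pt] /asboolP /= H1 /asboolP /= H2.
have E : Ms = Mt.
  by apply: funext => b; apply/eqP; rewrite eqEfsubset H1 H2.
subst Mt; congr exist; exact: Prop_irrelevance.
Qed.

Lemma Rz_chain (A : HT -> Prop) : classical_sets.total_on A Rz ->
  exists t, forall s, A s -> Rz s t.
Proof.
move=> tot.
have [[a0 Aa0]|nA] := pselect (exists a, A a); last first.
  have p : hallc N /\ forall b, N b `<=` N b by split => // b; exact: fsubset_refl.
  exists (exist _ N p) => s As; exfalso; apply: nA; by exists s.
pose Minf b := [fset y in N b | `[< forall s, A s -> y \in proj1_sig s b >]].
have MinfN b : Minf b `<=` N b.
  by apply/fsubsetP => y; rewrite inE => /andP[].
have Minfs s b : A s -> Minf b `<=` proj1_sig s b.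
  move=> As; apply/fsubsetP => y; rewrite inE => /andP[_ /asboolP]; exact.
have hM : hallc Minf.
  move=> B BD.
  have Hb b : exists s, A s /\ proj1_sig s b `<=` Minf b.
    pose Q := (fun (y : Rt) (c : HT) => y \in proj1_sig c b -> y \in Minf b).
    have Qd : forall y c c', Rz c c' -> Q y c -> Q y c'.
      move=> y c c' /asboolP Rcc' Q1 yc'; apply: Q1.
      exact: (fsubsetP (Rcc' b)).
    have Hw : forall y, y \in N b -> exists s, A s /\ Q y s.
      move=> y yN.
      have [all|nall] := pselect (forall s, A s -> y \in proj1_sig s b).
        exists a0; split => // _; rewrite /Minf inE /=; apply/andP; split => //; exact/asboolP.
      move/existsNP: nall => [s Hs].
      have [As ys] : A s /\ y \notin proj1_sig s b.
        split; first by apply: contrapT => nAs; apply: Hs => /nAs.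
        by apply/negP => ys; apply: Hs.
      by exists s; split => // /negP.
    have [c [Ac Qc]] := @chain_fin A _ (N b) Q a0 tot Aa0 Qd Hw.
    exists c; split => //; apply/fsubsetP => y ys.
    have yN := fsubsetP (proj2 (proj2_sig c) b) y ys; exact: (Qc y yN ys).
  have Qd : forall b c c', Rz c c' -> (fun b c => proj1_sig c b `<=` Minf b) b c ->
      (fun b c => proj1_sig c b `<=` Minf b) b c'.
    move=> b c c' /asboolP Rcc' Q1; exact: fsubset_trans (Rcc' b) Q1.
  have [c [Ac Qc]] := @chain_fin A _ B
      (fun b c => proj1_sig c b `<=` Minf b) a0 tot Aa0 Qd (fun b _ => Hb b).
  apply: leq_trans (proj1 (proj2_sig c) B BD) _.
  by apply: fsubset_leq_card; apply: UN_sub.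
exists (exist _ Minf (conj hM MinfN)) => s As; apply/asboolP => b /=.
exact: Minfs.
Qed.

Definition Mrem (M : L -> {fset Rt}) b y x := if x == b then M b `\ y else M x.

Lemma Mrem_out M b y B : b \notin B -> UN (Mrem M b y) B = UN M B.
Proof.
move=> bB; apply/fsetP => x; apply/UNP/UNP => [] [c cB xc]; exists c => //;
  move: xc; rewrite /Mrem; case: eqP => // E; by move: bB; rewrite -E cB.
Qed.

Lemma Mrem_in M b y B : b \in B ->
  (M b `\ y) `|` UN M (B `\ b) `<=` UN (Mrem M b y) B.
Proof.
move=> bB; apply/fsubsetP => x; rewrite in_fsetU => /orP [xb|/UNP [c]].
  by apply/UNP; exists b => //; rewrite /Mrem eqxx.
rewrite in_fsetD1 => /andP [cb cB] xc; apply/UNP; exists c => //.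
by rewrite /Mrem (negbTE cb).
Qed.

Lemma remove_key M b y1 y2 : hallc M -> D b -> y1 != y2 ->
  forall B1 B2 : {fset L}, (forall x, x \in B1 -> D x) -> (forall x, x \in B2 -> D x) ->
  (#|` UN (Mrem M b y1) B1| < #|` B1|)%N -> (#|` UN (Mrem M b y2) B2| < #|` B2|)%N -> False.
Proof.
move=> hM Db y12 B1 B2 D1 D2 h1 h2.
have bB1 : b \in B1.
  apply/negPn/negP => nb; move: h1; rewrite Mrem_out // ltnNge.
  by rewrite hM.
have bB2 : b \in B2.
  apply/negPn/negP => nb; move: h2; rewrite Mrem_out // ltnNge.
  by rewrite hM.
set C1 := B1 `\ b; set C2 := B2 `\ b.
set V1 := (M b `\ y1) `|` UN M C1; set V2 := (M b `\ y2) `|` UN M C2.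
have cV1 : (#|` V1| < #|` B1|)%N.
  exact: leq_ltn_trans (fsubset_leq_card (Mrem_in _ _ bB1)) h1.
have cV2 : (#|` V2| < #|` B2|)%N.
  exact: leq_ltn_trans (fsubset_leq_card (Mrem_in _ _ bB2)) h2.
have cB1 : #|` B1| = (#|` C1|).+1 by rewrite (cardfsD1 b B1) bB1.
have cB2 : #|` B2| = (#|` C2|).+1 by rewrite (cardfsD1 b B2) bB2.
have nbC : b \notin C1 `|` C2 by rewrite in_fsetU !in_fsetD1 eqxx.
set E := b |` (C1 `|` C2).
have cE : #|` E| = (#|` C1 `|` C2|).+1 by rewrite cardfsU1 nbC.
have DE : forall x, x \in E -> D x.
  move=> x; rewrite in_fset1U in_fsetU !in_fsetD1 => /orP [/eqP ->//|/orP[]]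
    /andP[_ ?]; by [apply: D1|apply: D2].
have DI : forall x, x \in C1 `&` C2 -> D x.
  by move=> x; rewrite in_fsetI in_fsetD1 => /andP [/andP [_ ?] _]; apply: D1.
have sE : UN M E `<=` V1 `|` V2.
  apply/fsubsetP => x /UNP [c]; rewrite in_fset1U in_fsetU => /orP [/eqP ->|].
    move=> xb; case: (eqVneq x y1) => [E1|N1].
      have N2 : x != y2 by rewrite E1.
      by rewrite /V1 /V2 !in_fsetU !in_fsetD1 N2 xb /= !orbT.
    by rewrite /V1 /V2 !in_fsetU !in_fsetD1 N1 xb.
  move=> /orP [cC|cC] xc; rewrite /V1 /V2 !in_fsetU; apply/orP.
    by left; apply/orP; right; apply/UNP; exists c.
  by right; apply/orP; right; apply/UNP; exists c.
have sI : UN M (C1 `&` C2) `<=` V1 `&` V2.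
  apply/fsubsetP => x /UNP [c]; rewrite in_fsetI => /andP [c1 c2] xc.
  rewrite /V1 /V2 in_fsetI !in_fsetU; apply/andP; split; apply/orP; right; apply/UNP;
    by exists c.
have h3 := leq_trans (hM E DE) (fsubset_leq_card sE).
have h4 := leq_trans (hM _ DI) (fsubset_leq_card sI).
have h5 := cardfsUI V1 V2.
have h6 := cardfsUI C1 C2.
lia.
Qed.

Theorem hall_inf : exists f : L -> Rt, (forall b, D b -> f b \in N b) /\
  (forall b1 b2, D b1 -> D b2 -> f b1 = f b2 -> b1 = b2).
Proof.
have [t tmax] := classical_sets.Zorn Rz_refl Rz_trans Rz_anti Rz_chain.
case: t tmax => M [hM MN] tmax.
have nh : forall b y, D b -> y \in M b -> exists B : {fset L},
    (forall x, x \in B -> D x) /\ (#|` UN (Mrem M b y) B| < #|` B|)%N.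
  move=> b y Db yM; apply: contrapT => nex.
  have hR : hallc (Mrem M b y).
    move=> B BD; rewrite leqNgt; apply/negP => lt; apply: nex; by exists B.
  have sub : forall x, Mrem M b y x `<=` N x.
    move=> x; rewrite /Mrem; case: eqP => [->|_] //.
    exact: fsubset_trans (fsubsetDl _ _) (MN b).
  have := tmax (exist _ (Mrem M b y) (conj hR sub)).
  have R1 : Rz (exist _ M (conj hM MN)) (exist _ (Mrem M b y) (conj hR sub)).
    apply/asboolP => x /=; rewrite /Mrem; case: eqP => [->|_]; last exact: fsubset_refl.
    exact: fsubsetDl.
  move=> /(_ R1) [] /(congr1 (fun F => F b)); rewrite /Mrem eqxx => E.
  by move: yM; rewrite -E in_fsetD1 eqxx.
have sing : forall b, D b -> exists y, M b = [fset y].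
  move=> b Db.
  have c1 : (0 < #|` M b|)%N.
    by have := hM [fset b]; rewrite UN1 cardfs1; apply => x; rewrite inE => /eqP ->.
  move: c1; rewrite cardfs_gt0 => /fset0Pn [y1 y1M].
  have [E0|/fset0Pn [y2]] := eqVneq (M b `\ y1) fset0.
    exists y1; apply/fsetP => x; rewrite in_fset1; apply/idP/eqP => [xM|->//].
    apply/eqP; apply: contraT => nx.
    by have := in_fset0 x; rewrite -E0 in_fsetD1 nx xM.
  rewrite in_fsetD1 => /andP [y21 y2M].
  have [B1 [D1 h1]] := nh b y1 Db y1M.
  have [B2 [D2 h2]] := nh b y2 Db y2M.
  exfalso; apply: (@remove_key M b y1 y2 hM Db _ B1 B2 D1 D2 h1 h2).
  by rewrite eq_sym.
have ex : forall b, exists y, D b -> M b = [fset y].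
  move=> b; have [Db|nDb] := pselect (D b).
    by have [y Hy] := sing b Db; exists y.
  by exists y0.
have [f Hf] := choice ex.
exists f; split.
  move=> b Db; apply: (fsubsetP (MN b)); by rewrite (Hf b Db) in_fset1.
move=> b1 b2 D1 D2 E; apply: contrapT => n12.
have DB : forall x, x \in [fset b1; b2] -> D x.
  by move=> x; rewrite !inE => /orP [] /eqP ->.
have := hM _ DB.
have -> : UN M [fset b1; b2] = [fset f b1].
  apply/fsetP => x; apply/UNP/idP => [[c]|].
    rewrite !inE => /orP [] /eqP ->; rewrite ?Hf // ?in_fset1 ?E //.
  rewrite in_fset1 => /eqP ->; exists b1; first by rewrite !inE eqxx.
  by rewrite Hf // in_fset1.
rewrite cardfs2 cardfs1.
by case: eqP.
Qed.

End Hall.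

Local Open Scope group_scope.

Section Main.
Variables (G : groupType) (H T : {pred G}) (piH piT : G -> G).
Hypotheses (Hsub : is_subgroup H) (Htr : right_transversal H T)
  (Hpi : forall g, [/\ piH g \in H, piT g \in T & g = piH g * piT g]).

Lemma H1 : 1 \in H. Proof. by case: Hsub. Qed.
Lemma HM x y : x \in H -> y \in H -> x * y \in H. Proof. by case: Hsub => _ h _; apply: h. Qed.
Lemma HV x : x \in H -> x^-1 \in H. Proof. by case: Hsub => _ _ h; apply: h. Qed.

Lemma T_uniq g t1 t2 : t1 \in T -> t2 \in T -> g * t1^-1 \in H -> g * t2^-1 \in H -> t1 = t2.
Proof.
move=> T1 T2 H1' H2'; have [t [_ U]] := Htr g.
by rewrite -(U t1 (conj T1 H1')) -(U t2 (conj T2 H2')).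
Qed.

Lemma piH_eq g : g * (piT g)^-1 = piH g.
Proof. by case: (Hpi g) => _ _ {1}->; rewrite mulgK. Qed.

Lemma piT_char g t : t \in T -> g * t^-1 \in H -> piT g = t.
Proof.
move=> Tt Ht; case: (Hpi g) => hH tT _; apply: (T_uniq tT Tt _ Ht).
by rewrite piH_eq.
Qed.

Lemma piT_mul h g : h \in H -> piT (h * g) = piT g.
Proof.
move=> hH; case: (Hpi g) => hg tg _; apply: piT_char => //.
by rewrite -mulgA piH_eq; apply: HM.
Qed.

Lemma piT_T t : t \in T -> piT t = t.
Proof. by move=> Tt; apply: piT_char => //; rewrite mulgV H1. Qed.

Lemma from_hall (m : nat) (Sx : 'I_m -> {fset G}) :
  (forall i s, s \in Sx i -> s \in H) ->
  hallc (fun p : G * 'I_m => p.1 \in H) (fun p => [fset p.1 * s^-1 | s in Sx p.2]) ->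
  kparadoxical H Sx.
Proof.
move=> SH hc; have [f [fN finj]] := hall_inf 1 hc.
split => //.
exists (fun i s x => exists h, [/\ h \in H, f (h, i) = x & x * s = h]).
split; last split.
- move=> i s x sS [h [hH _ E]].
  have -> : x = h * s^-1 by rewrite -E mulgK.
  by apply: HM => //; apply: HV; apply: SH sS.
- move=> i j s t x sS tS [h [hH E1 E2]] [h' [hH' E1' E2']].
  have := finj (h, i) (h', j) hH hH'; rewrite E1 E1' => /(_ erefl) [eh eij].
  split => //; apply: (@mulgI _ x); by rewrite E2 E2' eh.
- move=> i g gH; have /imfsetP [s /= sS E] := fN (g, i) gH.
  exists s => //; exists (f (g, i)); first by exists g; split => //; rewrite E mulgVK.
  by rewrite E mulgVK.
Qed.

Variables (k : nat) (S : 'I_k.+2 -> {fset G}) (F : {fset G}).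
Hypotheses (Hpar : kparadoxical [pred x | true] S) (FT : {subset F <= T}).

Definition PhiI i := [fset piT x | x in fmulg F (finvg (S i))].
Definition PhiD := [fset piT x | x in fmulg F (finvg (\bigcup_(i <- enum 'I_k.+2) S i))].
Definition Sp i := [fset x in fmulg (fmulg (PhiI i) (S i)) (finvg F) | x \in H].
Definition Nb (p : G * 'I_k.+2) := [fset p.1 * s^-1 | s in Sp p.2].

Lemma count_main (B : {fset G * 'I_k.+2}) : (forall b, b \in B -> b.1 \in H) ->
  (#|` B| * #|` F| <= #|` UN Nb B| * #|` PhiD|)%N.
Proof.
move=> BH.
have [_ [P [_ [Pd Pc]]]] := Hpar.
have ex : forall p : G * 'I_k.+2, exists q : G * G,
    [/\ q.1 \in S p.2, P p.2 q.1 q.2 & p.1 = q.2 * q.1].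
  move=> [g i]; have [s sS [x Px E]] := Pc i g isT; by exists (s, x).
have [c Hc] := choice ex.
pose src p := (c p).2.
have src_inj : forall p p', src p = src p' -> p = p'.
  move=> [g i] [g' i'] E; have [s1 P1 E1] := Hc (g, i); have [s2 P2 E2] := Hc (g', i').
  rewrite /src in E; rewrite -E in P2.
  have [ei es] := Pd _ _ _ _ _ s1 s2 P1 P2.
  move: ei E1 E2 => /= ei -> ->; subst i'; by rewrite E es.
pose B' := [fset (b.1 * f, b.2) | b in B, f in F].
have cB' : #|` B'| = (#|` B| * #|` F|)%nat.
  apply: card2_inj => b b' f f' bB b'B fF f'F [E1 E2].
  have ef : f = f'.
    apply: (@T_uniq (b.1 * f)); try exact: FT.
      by rewrite mulgK; apply: BH.
    by rewrite E1 mulgK; apply: BH.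
  subst f'; split => //; move: E1 => /mulIg E1.
  by case: b b'B E1 E2 bB => [x i]; case: b' => [x' i'] /= _ -> ->.
pose W := [fset x * phi | x in UN Nb B, phi in PhiD].
have sub : src @` B' `<=` W.
  apply/fsubsetP => y /imfsetP [p /imfset2P [[h i] hB [f fF ->]] ->] /=.
  have hH : h \in H by apply: (BH _ hB).
  have [/= sS Px E] := Hc (h * f, i).
  rewrite /src; set x := (c (h * f, i)).2 in Px E *; set s := (c (h * f, i)).1 in sS Px E *.
  have ex1 : x^-1 * h = s * f^-1.
    by apply: (@mulIg _ f); rewrite mulgVK -mulgA E mulKg.
  have xe : x = h * (f * s^-1) by rewrite mulgA E mulgK.
  have phiT : piT x = piT (f * s^-1) by rewrite xe piT_mul.
  have phiS : piT x \in PhiI i.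
    rewrite phiT; apply/imfsetP; exists (f * s^-1) => //.
    apply/imfset2P; exists f => //; exists s^-1 => //.
    by apply/imfsetP; exists s.
  have phiP : piT x \in PhiD.
    rewrite phiT; apply/imfsetP; exists (f * s^-1) => //.
    apply/imfset2P; exists f => //; exists s^-1 => //.
    apply/imfsetP; exists s => //; apply/bigfcupP; exists i => //.
    by rewrite mem_enum.
  apply/imfset2P; exists (piH x); last by exists (piT x) => //; case: (Hpi x).
  apply/UNP; exists (h, i) => //=.
  apply/imfsetP; exists ((piH x)^-1 * h); last by rewrite invgM invgK mulVKg.
  rewrite /Sp inE /=; apply/andP; split; last first.
    by apply: HM => //; apply: HV; case: (Hpi x).
  have -> : (piH x)^-1 * h = (piT x * s) * f^-1.
    by rewrite -piH_eq invgM invgK -mulgA ex1 mulgA.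
  apply/imfset2P; exists (piT x * s); last by exists f^-1 => //; apply/imfsetP; exists f.
  by apply/imfset2P; exists (piT x) => //; exists s.
have cs : #|` src @` B'| = #|` B'|.
  by rewrite card_in_imfset //= => p p' _ _; apply: src_inj.
rewrite -cB' -cs; apply: leq_trans (fsubset_leq_card sub) _.
exact: card2_le.
Qed.

Lemma restrict2 (Sx : 'I_k.+2 -> {fset G}) : kparadoxical H Sx ->
  kparadoxical H (fun j : 'I_2 => Sx (widen_ord (isT : 2 <= k.+2) j)).
Proof.
case=> SH [P [PH [Pd Pc]]]; split; first by move=> i s; apply: SH.
exists (fun j s x => P (widen_ord (isT : 2 <= k.+2) j) s x); split; last split.
- by move=> i s x sS; apply: PH sS.
- move=> i j s t x sS tS Pi Pj; have [E ->] := Pd _ _ _ _ _ sS tS Pi Pj.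
  by split => //; apply: val_inj; move: (congr1 val E).
- by move=> i g gH; apply: Pc.
Qed.

Lemma sum_restrict2 (Sx : 'I_k.+2 -> {fset G}) :
  (\sum_(j < 2) #|` Sx (widen_ord (isT : 2 <= k.+2) j)| <= \sum_(i < k.+2) #|` Sx i|)%N.
Proof.
rewrite big_ord_recl big_ord1 [X in (_ <= X)%N]big_ord_recl [X in (_ <= _ + X)%N]big_ord_recl.
have -> : widen_ord (isT : 2 <= k.+2) ord0 = ord0 by apply: val_inj.
have -> : widen_ord (isT : 2 <= k.+2) (lift ord0 ord0) = lift ord0 (ord0 : 'I_k.+1).
  by apply: val_inj.
by rewrite leq_add2l leq_addr.
Qed.

Lemma card_bigcup_le (I : eqType) (r : seq I) (Fx : I -> {fset G}) :
  (#|` \bigcup_(i <- r) Fx i| <= \sum_(i <- r) #|` Fx i|)%N.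
Proof.
elim: r => [|a r IH]; first by rewrite !big_nil cardfs0.
rewrite !big_cons cardfsU; apply: leq_trans (leq_subr _ _) _.
by rewrite leq_add2l.
Qed.

Lemma main_sec : 1 \in S ord0 -> F != fset0 ->
  (#|` PhiD| = #|` F| ->
     kparadoxical H Sp /\ tarski_number_le H (\sum_(i < k.+2) #|` Sp i|)) /\
  (2 * #|` PhiD| <= k.+2 * #|` F| ->
     (exists S2 : 'I_2 -> {fset G},
        kparadoxical H S2 /\ S2 ord0 `|` S2 ord_max = \bigcup_(i <- enum 'I_k.+2) Sp i) /\
     tarski_number_le H (2 * \sum_(i < k.+2) #|` Sp i|))%N.
Proof.
move=> S1 Fn.
have F0 : (0 < #|` F|)%N by rewrite cardfs_gt0.
have Phi0 : (0 < #|` PhiD|)%N.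
  move: Fn => /fset0Pn [f fF]; rewrite cardfs_gt0; apply/fset0Pn.
  exists (piT (f * 1^-1)); apply/imfsetP; exists (f * 1^-1) => //.
  apply/imfset2P; exists f => //; exists 1^-1 => //; apply/imfsetP; exists 1 => //.
  by apply/bigfcupP; exists ord0 => //; rewrite mem_enum.
have SpH : forall i s, s \in Sp i -> s \in H.
  by move=> i s; rewrite /Sp inE => /andP[].
split.
- move=> ePhi.
  have kp : kparadoxical H Sp.
    apply: from_hall => // B BH.
    have := count_main BH; rewrite ePhi leq_pmul2r //.
  split => //; exists (fun j => Sp (widen_ord (isT : 2 <= k.+2) j)); split.
    exact: restrict2.
  exact: sum_restrict2.
- move=> hPhi.
  set U := \bigcup_(i <- enum 'I_k.+2) Sp i.
  have UH : forall s, s \in U -> s \in H.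
    by move=> s /bigfcupP [i _]; apply: SpH.
  have kp : kparadoxical H (fun _ : 'I_2 => U).
    apply: from_hall => [j s|B2 BH2]; first exact: UH.
    set A := [fset p.1 | p in B2].
    set Ik := [fset x in enum 'I_k.+2].
    set Bk := [fset ((a, i) : G * 'I_k.+2) | a in A, i in Ik].
    have BkH : forall b, b \in Bk -> b.1 \in H.
      move=> b /imfset2P [a /imfsetP [p pB ->] [i _ ->]] /=; exact: BH2.
    have cIk : #|` Ik| = k.+2.
      by rewrite card_fseq undup_id ?enum_uniq // size_enum_ord.
    have cBk : #|` Bk| = (#|` A| * k.+2)%nat.
      rewrite -[in X in _ = (_ * X)%nat]cIk; apply: card2_inj => a a' i i' _ _ _ _ [-> ->]; by [].
    have cB2 : (#|` B2| <= #|` A| * 2)%N.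
      have sB : B2 `<=` [fset ((a, j) : G * 'I_2) | a in A, j in [fset (ord0 : 'I_2); ord_max]].
        apply/fsubsetP => -[a j] pB; apply/imfset2P; exists a.
          by apply/imfsetP; exists (a, j).
        exists j => //; rewrite !inE; case: j {pB} => [[|[|n]] Hn] //.
      apply: leq_trans (fsubset_leq_card sB) _.
      apply: leq_trans (@card2_le _ _ _ _ _ _) _.
      by rewrite leq_mul2l cardfs2; case: eqP.
    have sUN : UN Nb Bk `<=` UN (fun p : G * 'I_2 => [fset p.1 * s^-1 | s in U]) B2.
      apply/fsubsetP => x /UNP [[a i] /imfset2P [a' /imfsetP [p pB ->] [i' _ [-> ->]]]].
      move=> /imfsetP [s /= sS ->]; apply/UNP; exists p => //.
      apply/imfsetP; exists s => //; apply/bigfcupP; exists i' => //.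
      by rewrite mem_enum.
    have hc := count_main BkH; rewrite cBk in hc.
    have h1 : (#|` A| * 2 * #|` PhiD| <=
        #|` UN (fun p : G * 'I_2 => [fset p.1 * s^-1 | s in U]) B2| * #|` PhiD|)%N.
      apply: leq_trans (_ : (#|` A| * k.+2 * #|` F| <= _)%N).
        by rewrite -!mulnA leq_mul2l hPhi orbT.
      apply: leq_trans hc _.
      by rewrite leq_mul2r (fsubset_leq_card sUN) orbT.
    rewrite leq_pmul2r // in h1.
    exact: leq_trans cB2 h1.
  split.
    by exists (fun _ => U); split => //; exact: fsetUid.
  exists (fun _ => U); split => //.
  rewrite big_ord_recl big_ord1 mul2n -addnn.
  have hU : (#|` U| <= \sum_(i < k.+2) #|` Sp i|)%N.
    apply: leq_trans (card_bigcup_le _ _) _.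
    by rewrite big_enum /=.
  exact: leq_add.
Qed.

End Main.

(* k-paradoxical decompositions are indexed by 'I_k.+2 (so k.+2 >= 2 plays
   the role of the paper's k), and S ord0 is the paper's S_1. *)
Theorem proposition3p1 (G : groupType) (H T : {pred G}) (piH piT : G -> G)
    (k : nat) (S : 'I_k.+2 -> {fset G}) (F : {fset G}) :
  ~ amenable G ->
  is_subgroup H ->
  right_transversal H T ->
  1 \in T ->
  (forall g, [/\ piH g \in H, piT g \in T & g = piH g * piT g]) ->
  kparadoxical [pred x | true] S ->
  1 \in S ord0 ->
  F != fset0 ->
  {subset F <= T} ->
  let Phi_ i := [fset piT x | x in fmulg F (finvg (S i))] in
  let Phi := [fset piT x | x in fmulg F (finvg (\bigcup_(i <- enum 'I_k.+2) S i))] in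
  let S' i := [fset x in fmulg (fmulg (Phi_ i) (S i)) (finvg F) | x \in H] in
  (#|` Phi| = #|` F| ->
     kparadoxical H S' /\ tarski_number_le H (\sum_(i < k.+2) #|` S' i|)) /\
  (2 * #|` Phi| <= k.+2 * #|` F| ->
     (exists S2 : 'I_2 -> {fset G},
        kparadoxical H S2 /\ S2 ord0 `|` S2 ord_max = \bigcup_(i <- enum 'I_k.+2) S' i) /\
     tarski_number_le H (2 * \sum_(i < k.+2) #|` S' i|))%N.
Proof.
move=> nam Hs Htr T1 Hpi Hp S1 Fn FT Phi_ Phi S'.
exact: (main_sec Hs Htr Hpi Hp FT S1 Fn).
Qed.
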